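(* Let $R$ be a commutative ring with identity and $S$ a multiplicative subset of $R$. Then $R$ is uniformly $S$-von Neumann regular if and only if every $R$-module is $u$-$S$-absolutely pure.
   Context: A multiplicative subset $S$ satisfies $1\in S$ and is closed under products. $R$ is uniformly $S$-von Neumann regular if there exists $s\in S$ such that for every $a\in R$ there is $r\in R$ with $sa=ra^2$. A short sequence $0\to A\xrightarrow{f}B\xrightarrow{g}C\to 0$ is $u$-$S$-exact if there is $s\in S$ with $s\,\mathrm{Ker}(f)=0$, $s\,\mathrm{Ker}(g)\subseteq\mathrm{Im}(f)$, $s\,\mathrm{Im}(f)\subseteq\mathrm{Ker}(g)$, $sC\subseteq\mathrm{Im}(g)$; it is $u$-$S$-pure if tensoring with any $R$-module gives a short $u$-$S$-exact sequence. An $R$-module $E$ is $u$-$S$-absolutely pure if every short $u$-$S$-exact sequence $0\to E\to B\to C\to 0$ beginning with $E$ is $u$-$S$-pure. *)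

(* Defs.v *)
From HB Require Import structures.
From mathcomp Require Import all_boot all_order all_algebra.
Set Implicit Arguments. Unset Strict Implicit. Unset Printing Implicit Defensive.
Import GRing.Theory.
Local Open Scope ring_scope.

Definition multiplicative_subset (R : comPzRingType) (S : {pred R}) : Prop :=
  1 \in S /\ (forall a b, a \in S -> b \in S -> a * b \in S).

Definition uniformly_S_vNr (R : comPzRingType) (S : {pred R}) : Prop :=
  exists2 s, s \in S & forall a : R, exists r : R, s * a = r * a ^+ 2.

Definition uS_exact (R : comPzRingType) (S : {pred R}) (A B C : lmodType R)
  (f : {linear A -> B}) (g : {linear B -> C}) : Prop :=
  exists2 s, s \in S &
    [/\ forall a, f a = 0 -> s *: a = 0,
        forall b, g b = 0 -> exists a, f a = s *: b,
        forall a, g (s *: f a) = 0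
      & forall c, exists b, g b = s *: c].

(* Tensor product A (x)_R N, concretely: an element is a formal finite sum of
   simple tensors a (x) n, represented by a list of pairs, and two formal sums
   represent the same element iff they are related by the smallest congruence
   (for concatenation = addition, which is commutative) generated by the
   bilinearity / balancing relations. *)
Inductive teq (R : comPzRingType) (A N : lmodType R) :
    seq (A * N) -> seq (A * N) -> Prop :=
| teq_refl t : teq t t
| teq_sym t u : teq t u -> teq u t
| teq_trans t u v : teq t u -> teq u v -> teq t v
| teq_cat t1 t2 u1 u2 : teq t1 u1 -> teq t2 u2 -> teq (t1 ++ t2) (u1 ++ u2)
| teq_swap t u : teq (t ++ u) (u ++ t)
| teq_addl (a a' : A) (n : N) : teq [:: (a + a', n)] [:: (a, n); (a', n)]
| teq_addr (a : A) (n n' : N) : teq [:: (a, n + n')] [:: (a, n); (a, n')]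
| teq_scale (r : R) (a : A) (n : N) : teq [:: (r *: a, n)] [:: (a, r *: n)]
| teq_zero (n : N) : teq [:: (0, n)] [::].

Definition tmap (R : comPzRingType) (A B N : lmodType R) (f : A -> B)
  (t : seq (A * N)) : seq (B * N) := map (fun p => (f p.1, p.2)) t.

Definition tscale (R : comPzRingType) (A N : lmodType R) (r : R)
  (t : seq (A * N)) : seq (A * N) := map (fun p => (r *: p.1, p.2)) t.

Definition uS_exact_tensor (R : comPzRingType) (S : {pred R}) (A B C : lmodType R)
  (f : {linear A -> B}) (g : {linear B -> C}) (N : lmodType R) : Prop :=
  exists2 s, s \in S &
    [/\ forall t : seq (A * N), teq (tmap f t) [::] -> teq (tscale s t) [::],
        forall u : seq (B * N), teq (tmap g u) [::] ->
          exists t : seq (A * N), teq (tmap f t) (tscale s u),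
        forall t : seq (A * N), teq (tmap g (tscale s (tmap f t))) [::]
      & forall w : seq (C * N), exists u : seq (B * N), teq (tmap g u) (tscale s w)].

Definition uS_pure (R : comPzRingType) (S : {pred R}) (A B C : lmodType R)
  (f : {linear A -> B}) (g : {linear B -> C}) : Prop :=
  forall N : lmodType R, uS_exact_tensor S f g N.

Definition uS_absolutely_pure (R : comPzRingType) (S : {pred R}) (E : lmodType R) : Prop :=
  forall (B C : lmodType R) (f : {linear E -> B}) (g : {linear B -> C}),
    uS_exact S f g -> uS_pure S f g.

(* Main.v *)
Require Import Defs.
From HB Require Import structures.
From mathcomp Require Import all_boot all_order all_algebra.
From mathcomp Require Import ring.
From mathcomp Require Import boolp classical_sets functions.
Import GRing.Theory.
Local Open Scope ring_scope.
Set Implicit Arguments. Unset Strict Implicit. Unset Printing Implicit Defensive.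

Section Tensor.
Variables (R : comPzRingType) (A N : lmodType R).
Local Notation teq := (@teq R A N).

Lemma teq_catl t u v : teq t u -> teq (t ++ v) (u ++ v).
Proof. by move=> h; apply: teq_cat => //; apply: teq_refl. Qed.
Lemma teq_catr t u v : teq t u -> teq (v ++ t) (v ++ u).
Proof. by move=> h; apply: teq_cat => //; apply: teq_refl. Qed.
Lemma teq_cons p t u : teq t u -> teq (p :: t) (p :: u).
Proof. exact: (@teq_catr t u [:: p]). Qed.

Lemma teq_perm (s t : seq (A * N)) : perm_eq s t -> teq s t.
Proof.
elim: s t => [|x s IH] t.
  by rewrite perm_sym => /perm_nilP ->; apply: teq_refl.
move=> pst.
have xt : x \in t by rewrite -(perm_mem pst) mem_head.
move: pst; case/splitPr: xt => t1 t2 pst.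
have e1 : perm_eq (t1 ++ x :: t2) (x :: t1 ++ t2) by rewrite -cat1s perm_catCA.
have h : perm_eq s (t1 ++ t2).
  by rewrite -(perm_cons x); apply: (perm_trans pst).
apply: (teq_trans (teq_cons x (IH _ h))).
have -> : t1 ++ x :: t2 = (t1 ++ [:: x]) ++ t2 by rewrite -catA.
have -> : x :: t1 ++ t2 = ([:: x] ++ t1) ++ t2 by [].
apply: teq_catl; apply: teq_swap.
Qed.

Lemma teq_map (X : Type) (F H : X -> A * N) (G : seq X) :
  (forall x, teq [:: F x] [:: H x]) -> teq (map F G) (map H G).
Proof.
move=> h; elim: G => [|x G IH] /=; first exact: teq_refl.
exact: (@teq_cat _ _ _ [:: F x] _ [:: H x]).
Qed.

Lemma teq_r0 (a : A) : teq [:: (a, 0)] [::].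
Proof.
have -> : (0 : N) = (0 : R) *: 0 by rewrite scale0r.
apply: teq_trans (teq_sym (teq_scale _ _ _)) _.
rewrite scale0r; exact: teq_zero.
Qed.

Lemma teq_nil_all (t : seq (A * N)) :
  (forall p, p \in t -> p.1 = 0) -> teq t [::].
Proof.
elim: t => [|p t IH] h /=; first exact: teq_refl.
have -> : p :: t = [:: p] ++ t by [].
have -> : [::] = ([::] ++ [::] : seq (A * N)) by [].
apply: teq_cat; last by apply: IH => q qt; apply: h; rewrite inE qt orbT.
case: p h => a n h; have -> : a = 0 by exact: (h (a, n) (mem_head _ _)).
exact: teq_zero.
Qed.

Lemma teq_mapD (X : Type) (F H : X -> A) (G : seq X) (k : X -> N) :
  teq (map (fun g => (F g + H g, k g)) G)
      (map (fun g => (F g, k g)) G ++ map (fun g => (H g, k g)) G).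
Proof.
elim: G => [|y G IH] /=; first exact: teq_refl.
apply: teq_trans (@teq_cat _ _ _ [:: (F y + H y, k y)] _ [:: (F y, k y); (H y, k y)] _
   (teq_addl _ _ _) IH) _.
apply: teq_perm => /=; rewrite perm_cons -cat1s perm_catCA //.
Qed.

Definition phi (L : seq (A * N)) (g : N) : A := \sum_(q <- L | q.2 == g) q.1.

Lemma phi_nil g : phi [::] g = 0.
Proof. by rewrite /phi big_nil. Qed.

Lemma phi_cons p L g : phi (p :: L) g = (if p.2 == g then p.1 else 0) + phi L g.
Proof. by rewrite /phi big_cons; case: ifP => _; rewrite ?add0r. Qed.

Lemma phi_cat L1 L2 g : phi (L1 ++ L2) g = phi L1 g + phi L2 g.
Proof. by rewrite /phi big_cat. Qed.

Lemma teq_single (G : seq N) (y : N) (a : A) : uniq G -> y \in G ->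
  teq (map (fun g => (if y == g then a else 0, g)) G) [:: (a, y)].
Proof.
elim: G => [|z G IH] //= /andP[zG uG]; rewrite inE => yin.
case: (eqVneq y z) => [yz|yz].
  subst y.
  have -> : (a, z) :: [seq (if z == g then a else 0, g) | g <- G] =
            [:: (a, z)] ++ [seq (if z == g then a else 0, g) | g <- G] by [].
  rewrite -[X in teq _ X]cats0; apply: teq_catr; apply: teq_nil_all => p /mapP[g gG ->] /=.
  by case: eqP => // yg; rewrite yg gG in zG.
rewrite (negbTE yz) /= in yin.
have -> : (0, z) :: [seq (if y == g then a else 0, g) | g <- G] =
            [:: (0, z)] ++ [seq (if y == g then a else 0, g) | g <- G] by [].
rewrite -[X in teq _ X]cat0s; apply: teq_cat; [exact: teq_zero | exact: IH].
Qed.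

Lemma teq_group (L : seq (A * N)) (G : seq N) : uniq G ->
  (forall p, p \in L -> p.2 \in G) -> teq L (map (fun g => (phi L g, g)) G).
Proof.
move=> uG; elim: L => [|p L IH] h.
  apply: teq_sym; apply: teq_nil_all => q /mapP[g _ ->]; exact: phi_nil.
have e : map (fun g => (phi (p :: L) g, g)) G =
         map (fun g => ((if p.2 == g then p.1 else 0) + phi L g, g)) G.
  by apply: eq_map => g; rewrite phi_cons.
rewrite e; apply: teq_sym; apply: teq_trans (teq_mapD _ _ _ _) _.
have -> : p :: L = [:: p] ++ L by [].
apply: teq_cat; last first.
  by apply: teq_sym; apply: IH => q qL; apply: h; rewrite inE qL orbT.
clear e; case: p h => a n h /=; apply: teq_single => //; exact: (h (a, n) (mem_head _ _)).
Qed.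

Definition Krel (rel : seq (R * N)) (g : N) : R := \sum_(q <- rel | q.2 == g) q.1.
Definition relok (rel : seq (R * N)) := \sum_(q <- rel) q.1 *: q.2 = 0.
Definition fval (fam : seq (A * seq (R * N))) (g : N) : A :=
  \sum_(p <- fam) Krel p.2 g *: p.1.
Definition valid (fam : seq (A * seq (R * N))) := forall p, p \in fam -> relok p.2.

Lemma Krel_cons q rel g : Krel (q :: rel) g = (if q.2 == g then q.1 else 0) + Krel rel g.
Proof. by rewrite /Krel big_cons; case: ifP => _; rewrite ?add0r. Qed.

Lemma sum_pick (G : seq N) (y : N) (c : R) : uniq G -> y \in G ->
  \sum_(g <- G) (if y == g then c else 0) *: g = c *: y.
Proof.
move=> uG yG; rewrite (big_rem y) //= eqxx big1_seq ?addr0 // => g /andP[_ gr].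
case: eqP => [yg|]; last by rewrite scale0r.
by move: gr; rewrite -yg mem_rem_uniqF.
Qed.

Lemma sum_Krel (G : seq N) rel : uniq G -> (forall q, q \in rel -> q.2 \in G) ->
  \sum_(g <- G) Krel rel g *: g = \sum_(q <- rel) q.1 *: q.2.
Proof.
move=> uG; elim: rel => [|q rel IH] h.
  by rewrite big_nil big1 // => g _; rewrite /Krel big_nil scale0r.
rewrite big_cons -IH; last by move=> q' q'r; apply: h; rewrite inE q'r orbT.
under eq_bigr do rewrite Krel_cons scalerDl.
by rewrite big_split /= sum_pick // h // mem_head.
Qed.

Lemma teq_sumr (w : A) (X : Type) (F : X -> N) (G : seq X) :
  teq (map (fun g => (w, F g)) G) [:: (w, \sum_(g <- G) F g)].
Proof.
elim: G => [|x G IH] /=.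
  by rewrite big_nil; apply: teq_sym; apply: teq_r0.
rewrite big_cons.
apply: (teq_trans (u := [:: (w, F x); (w, \sum_(g <- G) F g)])); last exact: teq_sym (teq_addr _ _ _).
have -> : (w, F x) :: [seq (w, F g) | g <- G] = [:: (w, F x)] ++ [seq (w, F g) | g <- G] by [].
exact: teq_catr.
Qed.

Lemma teq_rel_vanish (w : A) rel (G : seq N) : relok rel -> uniq G ->
  (forall q, q \in rel -> q.2 \in G) ->
  teq (map (fun g => (Krel rel g *: w, g)) G) [::].
Proof.
move=> ok uG h.
apply: (teq_trans (teq_map (H := fun g => (w, Krel rel g *: g)) _ _)).
  move=> g; exact: teq_scale.
apply: (teq_trans (teq_sumr _ _ _)).
rewrite sum_Krel // ok; exact: teq_r0.
Qed.

Lemma teq_fam_vanish fam (G : seq N) : valid fam -> uniq G ->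
  (forall p q, p \in fam -> q \in p.2 -> q.2 \in G) ->
  teq (map (fun g => (fval fam g, g)) G) [::].
Proof.
move=> + uG; elim: fam => [|p fam IH] ok h.
  by apply: teq_nil_all => q /mapP[g _ ->]; rewrite /fval big_nil.
have -> : map (fun g => (fval (p :: fam) g, g)) G =
          map (fun g => (Krel p.2 g *: p.1 + fval fam g, g)) G.
  by apply: eq_map => g; rewrite /fval big_cons.
apply: teq_trans (teq_mapD _ _ _ _) _.
rewrite -[X in teq _ X]cat0s; apply: teq_cat.
  apply: teq_rel_vanish => //; first by apply: ok; rewrite mem_head.
  by move=> q; apply: h; rewrite mem_head.
apply: IH.
  by move=> p' p'f; apply: ok; rewrite inE p'f orbT.
by move=> p' q p'f; apply: h; rewrite inE p'f orbT.
Qed.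

Lemma ifA (b : bool) (x : A) : (if b then x else 0) = (b%:R : R) *: x.
Proof. by case: b; rewrite ?scale1r ?scale0r. Qed.
Lemma ifR (b : bool) (x : R) : (if b then x else 0) = (b%:R : R) * x.
Proof. by case: b; rewrite ?mul1r ?mul0r. Qed.

Lemma crit t u : teq t u -> exists fam, valid fam /\ forall g, phi t g - phi u g = fval fam g.
Proof.
elim => {t u}.
- move=> t; exists [::]; split => // g; by rewrite subrr /fval big_nil.
- move=> t u _ [fam [v e]]; exists (map (fun p => (- p.1, p.2)) fam); split.
    by rewrite /valid => p /mapP[q qf ->]; exact: (v q qf).
  move=> g; rewrite /fval big_map -opprB e /fval -sumrN.
  by apply: eq_bigr => p _; rewrite scalerN.
- move=> t u v _ [f1 [v1 e1]] _ [f2 [v2 e2]]; exists (f1 ++ f2); split.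
    by rewrite /valid => p; rewrite mem_cat => /orP[]; [exact: v1|exact: v2].
  move=> g; rewrite /fval big_cat -/(fval f1 g) -/(fval f2 g) -e1 -e2.
  by rewrite /= addrA subrK.
- move=> t1 t2 u1 u2 _ [f1 [v1 e1]] _ [f2 [v2 e2]]; exists (f1 ++ f2); split.
    by rewrite /valid => p; rewrite mem_cat => /orP[]; [exact: v1|exact: v2].
  move=> g; rewrite /fval big_cat -/(fval f1 g) -/(fval f2 g) -e1 -e2 !phi_cat /=.
  by rewrite opprD addrACA.
- move=> t u; exists [::]; split => // g.
  by rewrite !phi_cat [phi u g + _]addrC subrr /fval big_nil.
- move=> a a' n; exists [::]; split => // g.
  rewrite !phi_cons !phi_nil /fval big_nil /=.
  by case: (n == g); rewrite ?addr0 ?subrr ?add0r ?subr0.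
- move=> a n n'; exists [:: (a, [:: (1, n + n'); (-1, n); (-1, n')])]; split.
    rewrite /valid => p; rewrite inE => /eqP -> /=.
    by rewrite /relok !big_cons big_nil /= scale1r !scaleN1r addr0 -opprD subrr.
  move=> g; rewrite !phi_cons !phi_nil /fval big_cons big_nil /= !Krel_cons /Krel big_nil /=.
  rewrite !ifA !ifR !addr0.
  rewrite -?scalerDl -?scaleNr -?scalerDl -?scaleNr -?scalerDl.
  congr (_ *: _); ring.
- move=> r a n; exists [:: (a, [:: (r, n); (-1, r *: n)])]; split.
    rewrite /valid => p; rewrite inE => /eqP -> /=.
    by rewrite /relok !big_cons big_nil /= scaleN1r addr0 subrr.
  move=> g; rewrite !phi_cons !phi_nil /fval big_cons big_nil /= !Krel_cons /Krel big_nil /=.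
  rewrite !ifA !ifR !addr0 scalerA.
  rewrite -?scalerDl -?scaleNr -?scalerDl -?scaleNr -?scalerDl.
  congr (_ *: _); ring.
- move=> n; exists [::]; split => // g.
  rewrite !phi_cons !phi_nil /fval big_nil /=.
  by case: (n == g); rewrite ?addr0 ?subrr.
Qed.
End Tensor.

Section Solve.
Variables (R : comPzRingType) (e : R).
Hypothesis hee : e * e = e.
Hypothesis hreg : forall x : R, exists rho, rho * (e * x) ^+ 2 = e * x.

Lemma idem_gen (m : nat) (x : nat -> R) : exists alpha : nat -> R,
  (forall i, (i < m)%N -> (\sum_(0 <= j < m) alpha j * x j) * x i = e * x i) /\
  e * (\sum_(0 <= j < m) alpha j * x j) = \sum_(0 <= j < m) alpha j * x j.
Proof.
elim: m => [|m [al [H1 H2]]].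
  by exists (fun _ => 0); split => //; rewrite big_geq // mulr0.
set ep := \sum_(0 <= j < m) al j * x j in H1 H2.
have [rho hrho] := hreg (x m).
have hr : rho * e * x m * x m = e * x m.
  have e2 : (e * x m) ^+ 2 = (e * e) * (x m * x m) by ring.
  rewrite hee in e2; rewrite -hrho e2; ring.
exists (fun j => if j == m then rho * e * (1 - ep) else al j).
have -> : \sum_(0 <= j < m.+1) (if j == m then rho * e * (1 - ep) else al j) * x j
          = ep + rho * e * (1 - ep) * x m.
  rewrite big_nat_recr //= eqxx; congr (_ + _).
  by apply: eq_big_nat => j /andP[_ jm]; rewrite ltn_eqF.
split.
  move=> i; rewrite ltnS leq_eqVlt => /orP[/eqP ->|im].
    have -> : (ep + rho * e * (1 - ep) * x m) * x m = ep * x m + (1 - ep) * (rho * e * x m * x m) by ring.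
    rewrite hr.
    have -> : ep * x m + (1 - ep) * (e * x m) = e * x m + (ep - e * ep) * x m by ring.
    by rewrite H2 subrr mul0r addr0.
  have -> : (ep + rho * e * (1 - ep) * x m) * x i = ep * x i + rho * x m * (x i - ep * x i) * e by ring.
  rewrite H1 //.
  have -> : e * x i + rho * x m * (x i - e * x i) * e = e * x i + rho * x m * x i * (e - e * e) by ring.
  by rewrite hee subrr mulr0 addr0.
have -> : e * (ep + rho * e * (1 - ep) * x m) = e * ep + rho * (e * e) * (1 - ep) * x m by ring.
by rewrite H2 hee.
Qed.

Lemma sum_comb (M : lmodType R) n (a b : nat -> R) (y : R) (v : nat -> M) :
  \sum_(0 <= l < n) (e * (a l - y * b l)) *: v l =
  e *: (\sum_(0 <= l < n) a l *: v l - y *: \sum_(0 <= l < n) b l *: v l).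
Proof.
rewrite (scaler_sumr y) -sumrB scaler_sumr; apply: eq_bigr => l _.
by rewrite -scalerA scalerBl -scalerA.
Qed.

Lemma solve (E B : lmodType R) (f : {linear E -> B}) (n : nat) :
  forall (m : nat) (K : nat -> nat -> R) (c : nat -> E) (w : nat -> B),
  (forall i, (i < m)%N -> \sum_(0 <= l < n) K i l *: w l = f (c i)) ->
  exists W : nat -> E, forall i, (i < m)%N ->
    f (\sum_(0 <= l < n) K i l *: W l) = e *: f (c i).
Proof.
elim: n => [|n IH] m K c w H.
  exists (fun _ => 0) => i im; rewrite -(H i im) !big_geq // linear0 scaler0 //.
pose x i := K i 0%N.
have [al [Hal He]] := idem_gen m x.
set ep := \sum_(0 <= j < m) al j * x j in Hal He.
pose Al l := \sum_(0 <= j < m) al j * K j l.+1.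
pose C := \sum_(0 <= j < m) al j *: c j.
have Hs : forall i, (i < m)%N ->
    \sum_(0 <= l < n) K i l.+1 *: w l.+1 = f (c i) - x i *: w 0%N.
  move=> i im; rewrite -(H i im) big_nat_recl // /x addrAC subrr add0r //.
have HA : \sum_(0 <= l < n) Al l *: w l.+1 = f C - ep *: w 0%N.
  rewrite /Al.
  under eq_bigr do rewrite scaler_suml.
  rewrite exchange_big /=.
  have -> : \sum_(0 <= j < m) \sum_(0 <= l < n) (al j * K j l.+1) *: w l.+1 =
            \sum_(0 <= j < m) (al j *: f (c j) - (al j * x j) *: w 0%N).
    apply: eq_big_nat => j /andP[_ jm].
    rewrite -scalerA -scalerBr -Hs // scaler_sumr.
    by apply: eq_bigr => l _; rewrite scalerA.
  rewrite /C (linear_sum f) /ep scaler_suml sumrB; congr (_ - _); apply: eq_bigr => j _; by rewrite linearZ.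
pose K' i l := e * (K i l.+1 - x i * Al l).
pose c' i := e *: (c i - x i *: C).
have H' : forall i, (i < m)%N -> \sum_(0 <= l < n) K' i l *: w l.+1 = f (c' i).
  move=> i im; rewrite /K' sum_comb Hs // HA /c' (linearZZ f) (linearB f) (linearZZ f).
  have -> : x i *: (f C - ep *: w 0%N) = x i *: f C - (ep * x i) *: w 0%N.
    by rewrite scalerBr scalerA mulrC.
  rewrite Hal // !scalerBr !scalerA mulrA hee.
  by rewrite opprB addrA subrK.
have [W2 HW] := IH m K' c' (fun l => w l.+1) H'.
exists (fun l => if l is l'.+1 then e *: W2 l' else e *: (C - \sum_(0 <= l < n) Al l *: W2 l)).
move=> i im; rewrite big_nat_recl //=.
have := HW i im; rewrite /K' sum_comb /c' !(linearZZ f) !(linearB f) !(linearZZ f).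
set P := \sum_(0 <= l < n) K i l.+1 *: W2 l.
set Q := \sum_(0 <= l < n) Al l *: W2 l.
move=> HW'.
have -> : \sum_(0 <= i0 < n) K i i0.+1 *: (e *: W2 i0) = e *: P.
  by rewrite /P scaler_sumr; apply: eq_bigr => l _; rewrite !scalerA mulrC.
rewrite (linearD f) !(linearZZ f) (linearB f).
have -> : e *: f P = e *: (f P - x i *: f Q) + e *: (x i *: f Q) by rewrite -scalerDr subrK.
rewrite HW' (scalerA e e) hee !scalerBr !scalerA [K i 0%N * e]mulrC /x.
by rewrite addrACA addNr addr0 addrC subrK.
Qed.
End Solve.

Section Aux.
Variables (R : comPzRingType).

Lemma phi_tmap (A B N : lmodType R) (f : {linear A -> B}) (t : seq (A * N)) g :
  phi (tmap f t) g = f (phi t g).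
Proof. by rewrite /phi /tmap big_map (linear_sum f) big_mkcond [RHS]big_mkcond; apply: eq_bigr => p _ /=; case: ifP => _; rewrite ?linear0. Qed.

Lemma phi_tscale (A N : lmodType R) (a : R) (t : seq (A * N)) g :
  phi (tscale a t) g = a *: phi t g.
Proof. by rewrite /phi /tscale big_map scaler_sumr. Qed.

Lemma tscale_comp (A N : lmodType R) (a b : R) (t : seq (A * N)) :
  tscale a (tscale b t) = tscale (a * b) t.
Proof. by rewrite /tscale -map_comp; apply: eq_map => p /=; rewrite scalerA. Qed.

Lemma tmap_tscale (A B N : lmodType R) (f : {linear A -> B}) (a : R) (t : seq (A * N)) :
  tscale a (tmap f t) = tmap f (tscale a t).
Proof. by rewrite /tscale /tmap -!map_comp; apply: eq_map => p /=; rewrite (linearZZ f). Qed.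

Lemma snd_tscale (A N : lmodType R) (a : R) (t : seq (A * N)) :
  map snd (tscale a t) = map snd t.
Proof. by rewrite /tscale -map_comp. Qed.

Lemma teq_tscale (A N : lmodType R) (a : R) (x y : seq (A * N)) :
  teq x y -> teq (tscale a x) (tscale a y).
Proof.
elim => {x y} /=.
- move=> t; exact: teq_refl.
- move=> t u _ h; exact: teq_sym.
- move=> t u v _ h1 _ h2; exact: teq_trans h1 h2.
- move=> t1 t2 u1 u2 _ h1 _ h2; rewrite /tscale !map_cat; exact: teq_cat.
- move=> t u; rewrite /tscale !map_cat; exact: teq_swap.
- move=> x x' n; rewrite scalerDr; exact: teq_addl.
- move=> x n n'; exact: teq_addr.
- move=> r x n; rewrite scalerA mulrC -scalerA; exact: teq_scale.
- move=> n; rewrite scaler0; exact: teq_zero.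
Qed.

Lemma lift_seq (X Y Z W : Type) (F : X -> Z) (H : Y -> Z) (ys : seq (Y * W)) :
  (forall y, exists x, F x = H y) ->
  exists xs : seq (X * W), map (fun p => (F p.1, p.2)) xs = map (fun p => (H p.1, p.2)) ys.
Proof.
move=> h; elim: ys => [|[y w] ys [xs e]]; first by exists [::].
have [x hx] := h y; exists ((x, w) :: xs) => /=; by rewrite hx e.
Qed.

Lemma choose_on (X : eqType) (Y : Type) (y0 : Y) (P : X -> Y -> Prop) (G : seq X) :
  (forall x, x \in G -> exists y, P x y) -> exists F : X -> Y, forall x, x \in G -> P x (F x).
Proof.
elim: G => [|x G IH] h; first by exists (fun _ => y0).
have [F hF] : exists F : X -> Y, forall x', x' \in G -> P x' (F x').
  by apply: IH => x' x'G; apply: h; rewrite inE x'G orbT.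
have [y hy] := h x (mem_head _ _).
exists (fun x' => if x' == x then y else F x') => x'; rewrite inE.
by case: eqP => [-> //|_ /= x'G]; apply: hF.
Qed.

End Aux.


Section Forward.
Variables (R : comPzRingType) (E B C N : lmodType R).
Variables (f : {linear E -> B}) (g : {linear B -> C}) (s1 e z : R).
Hypothesis hk : forall a, f a = 0 -> s1 *: a = 0.
Hypothesis hm : forall b, g b = 0 -> exists a, f a = s1 *: b.
Hypothesis hc : forall a, g (s1 *: f a) = 0.
Hypothesis hsur : forall c, exists b, g b = s1 *: c.
Hypothesis hee : e * e = e.
Hypothesis hreg : forall x : R, exists rho, rho * (e * x) ^+ 2 = e * x.
Hypothesis hze : z * e = z.

Definition suppG (A A' : Type) (t : seq (A * N)) (fam : seq (A' * seq (R * N))) :=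
  undup (map snd t ++ flatten (map (fun p => map snd p.2) fam)).

Lemma suppG_t (A : eqType) (A' : Type) (t : seq (A * N)) (fam : seq (A' * seq (R * N))) p : p \in t -> p.2 \in suppG t fam.
Proof. by move=> pt; rewrite mem_undup mem_cat (map_f snd pt). Qed.

Lemma suppG_fam (A : Type) (A' : eqType) (t : seq (A * N)) (fam : seq (A' * seq (R * N))) p q : p \in fam -> q \in p.2 -> q.2 \in suppG t fam.
Proof.
move=> pf qp; rewrite mem_undup mem_cat; apply/orP; right.
apply/flattenP; exists (map snd p.2); first exact: (map_f (fun p => map snd p.2) pf).
exact: map_f.
Qed.

Lemma cond1 (t : seq (E * N)) : teq (tmap f t) [::] -> teq (tscale (z * s1) t) [::].
Proof.
move=> /crit [fam [vf ef]].
set G := suppG t fam.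
have uG : uniq G by apply: undup_uniq.
pose d := (0 : B, [::] : seq (R * N)).
pose n := size fam.
pose K i l := Krel (nth d fam l).2 (nth 0 G i).
pose w l := (nth d fam l).1.
pose c i := phi t (nth 0 G i).
have Hs : forall i, (i < size G)%N -> \sum_(0 <= l < n) K i l *: w l = f (c i).
  move=> i _; have := ef (nth 0 G i); rewrite phi_nil subr0 phi_tmap => ->.
  by rewrite /fval (big_nth d).
have [W HW] := solve hee hreg Hs.
pose fam2 := map (fun l => ((z * s1) *: W l, (nth d fam l).2)) (iota 0 n).
have key : forall h, h \in G -> (z * s1) *: phi t h = fval fam2 h.
  move=> h hG; have ih := nth_index 0 hG; have iG : (index h G < size G)%N by rewrite index_mem.
  rewrite /fval big_map -ih.
  have := HW _ iG; rewrite -(linearZZ f) => /eqP; rewrite -subr_eq0 -(linearB f) => /eqP /hk.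
  rewrite scalerBr => /eqP; rewrite subr_eq0 => /eqP h1.
  rewrite [RHS](_ : _ = (z * s1) *: \sum_(0 <= l < n) K (index h G) l *: W l); last first.
    by rewrite scaler_sumr /index_iota subn0; apply: eq_bigr => l _ /=; rewrite !scalerA mulrC.
  rewrite -[RHS]scalerA h1 /c !scalerA; congr (_ *: _); rewrite -[in LHS]hze; ring.
have vf2 : valid fam2.
  move=> p /mapP[l]; rewrite mem_iota add0n => /andP[_ ln] -> /=.
  by apply: vf; apply: mem_nth.
apply: (teq_trans (teq_group (L := tscale (z * s1) t) uG _)).
  move=> p pt; have : p.2 \in map snd (tscale (z * s1) t) by apply: map_f.
  by rewrite snd_tscale => /mapP[q qt ->]; apply: suppG_t.
have -> : [seq (phi (tscale (z * s1) t) g0, g0) | g0 <- G] = [seq (fval fam2 g0, g0) | g0 <- G].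
  by apply/eq_in_map => h hG; rewrite phi_tscale key.
apply: teq_fam_vanish => //.
move=> p q /mapP[l]; rewrite mem_iota add0n => /andP[_ ln] -> /= qp.
by apply: (@suppG_fam _ _ t fam (nth d fam l)) => //; apply: mem_nth.
Qed.

Lemma cond2 (u : seq (B * N)) : teq (tmap g u) [::] ->
  exists t : seq (E * N), teq (tmap f t) (tscale (s1 * s1) u).
Proof.
move=> /crit [famC [vC eC]].
have [famB hB] := @lift_seq _ _ _ (seq (R * N)) g (fun c => s1 *: c) famC hsur.
have snd_eq : map snd famB = map snd famC.
  by have := congr1 (map snd) hB; rewrite -!map_comp.
have vB : valid famB.
  move=> p pB; have : p.2 \in map snd famC by rewrite -snd_eq map_f.
  by case/mapP => q qC ->; apply: vC.
have gf : forall h, g (fval famB h) = s1 *: fval famC h.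
  move=> h; rewrite /fval (linear_sum g).
  transitivity (\sum_(p <- map (fun p => (g p.1, p.2)) famB) Krel p.2 h *: p.1).
    by rewrite big_map; apply: eq_bigr => p _; rewrite (linearZZ g).
  rewrite hB big_map scaler_sumr; apply: eq_bigr => p _ /=; rewrite !scalerA mulrC.
  done.
set G := suppG u famB.
have uG : uniq G by apply: undup_uniq.
have ex : forall h, h \in G -> exists a, f a = s1 *: (s1 *: phi u h - fval famB h).
  move=> h _; apply: hm; rewrite (linearB g) (linearZZ g) gf -phi_tmap.
  have := eC h; rewrite phi_nil subr0 => ->.
  by rewrite subrr.
have [F hF] := choose_on 0 ex.
exists (map (fun h => (F h, h)) G).
have -> : tmap f (map (fun h => (F h, h)) G) =
   map (fun h => ((s1 * s1) *: phi u h + (- (s1 *: fval famB h)), h)) G.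
  by rewrite /tmap -map_comp; apply/eq_in_map => h hG /=; rewrite hF // scalerBr scalerA.
apply: (teq_trans (teq_mapD (fun h => (s1 * s1) *: phi u h) (fun h => - (s1 *: fval famB h)) G (fun h => h))).
pose famB' := map (fun p => (- (s1 *: p.1), p.2)) famB.
have -> : map (fun h => (- (s1 *: fval famB h), h)) G = map (fun h => (fval famB' h, h)) G.
  apply: eq_map => h; congr (_, _); rewrite /fval big_map scaler_sumr -sumrN.
  by apply: eq_bigr => p _ /=; rewrite scalerN !scalerA mulrC.
apply: (teq_trans (teq_catr _ (teq_fam_vanish (fam := famB') _ uG _))).
- by rewrite /valid => p /mapP[q qB ->]; exact: (vB q qB).
- move=> p q /mapP[p' p'B ->] /= qp.
  by apply: (@suppG_fam _ _ u famB p').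
rewrite cats0; apply: teq_sym.
have -> : map (fun h => ((s1 * s1) *: phi u h, h)) G = map (fun h => (phi (tscale (s1 * s1) u) h, h)) G.
  by apply: eq_map => h; rewrite phi_tscale.
apply: teq_group => // p pt.
have : p.2 \in map snd (tscale (s1 * s1) u) by apply: map_f.
by rewrite snd_tscale => /mapP[q qt ->]; apply: suppG_t.
Qed.

Lemma cond3 (y : R) (t : seq (E * N)) : teq (tmap g (tscale (y * s1) (tmap f t))) [::].
Proof.
apply: teq_nil_all => p /mapP[q /mapP[q' /mapP[a at' ->] ->] ->] /=.
by rewrite -scalerA (linearZZ g) hc scaler0.
Qed.

Lemma cond4 (y : R) (w : seq (C * N)) : exists u : seq (B * N), teq (tmap g u) (tscale (y * s1) w).
Proof.
have h : forall c : C, exists b, g b = (y * s1) *: c.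
  move=> c; have [b hb] := hsur c; exists (y *: b); by rewrite (linearZZ g) hb scalerA.
have [u hu] := @lift_seq _ _ _ N g (fun c => (y * s1) *: c) w h.
by exists u; rewrite /tmap /tscale hu; apply: teq_refl.
Qed.
End Forward.


Lemma forward (R : comPzRingType) (S : {pred R}) : multiplicative_subset S ->
  uniformly_S_vNr S -> forall E : lmodType R, uS_absolutely_pure S E.
Proof.
move=> [S1 SM] [s sS hs] E B C f g [s1 s1S [hk hm hc hsur]] N.
have [r0 hr0] := hs (s ^+ 2).
set s3 := s ^+ 3.
have h3 : s3 = (r0 * s) * s3.
  have -> : s3 = s * s ^+ 2 by rewrite /s3 !exprS expr0; ring.
  rewrite [in LHS]hr0; ring.
have h6 : (r0 * s) ^+ 3 * s3 = s3 by rewrite [in RHS]h3 [in RHS]h3 [in RHS]h3; ring.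
pose e := r0 ^+ 3 * s3.
have hee : e * e = e.
  have -> : e * e = r0 ^+ 3 * ((r0 * s) ^+ 3 * s3) by rewrite /e /s3; ring.
  by rewrite h6.
have hs3e : s3 * e = s3.
  have -> : s3 * e = (r0 * s) ^+ 3 * s3 by rewrite /e /s3; ring.
  exact: h6.
have hreg : forall x : R, exists rho, rho * (e * x) ^+ 2 = e * x.
  move=> x; have [r hr] := hs x.
  pose u := r0 ^+ 3 * s ^+ 2.
  exists (e * u * r).
  have -> : e * u * r * (e * x) ^+ 2 = (e * e) * (e * u * (r * x ^+ 2)) by ring.
  rewrite hee -hr.
  have -> : e * u * (s * x) = e * (u * s) * x by ring.
  have -> : u * s = e by rewrite /u /e /s3; ring.
  by rewrite mulrA !hee.
pose z := s3 * s1.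
have hze : z * e = z by rewrite /z mulrAC hs3e.
have s3S : s3 \in S by rewrite /s3 !exprS expr0 mulr1; exact: (SM _ _ sS (SM _ _ sS sS)).
exists (z * s1); first exact: (SM _ _ (SM _ _ s3S s1S) s1S).
split.
- move=> t ht; exact: (cond1 hk hee hreg hze ht).
- move=> u hu; have [t ht] := cond2 hm hsur hu.
  exists (tscale s3 t); rewrite -tmap_tscale.
  by have := teq_tscale s3 ht; rewrite tscale_comp /z -mulrA.
- move=> t; exact: cond3.
- move=> w; exact: cond4.
Qed.

Record submodP (R : comPzRingType) (M : lmodType R) := SubmodP {
  sp : M -> Prop;
  sp0 : sp 0;
  spB : forall x y, sp x -> sp y -> sp (x - y);
  spZ : forall r x, sp x -> sp (r *: x) }.

Section Quot.
Variables (R : comPzRingType) (M : lmodType R) (Pr : submodP M).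
Local Notation P := (sp Pr).
Let P0 : P 0 := sp0 Pr.
Let PB : forall x y, P x -> P y -> P (x - y) := @spB _ _ Pr.
Let PZ : forall r x, P x -> P (r *: x) := @spZ _ _ Pr.

Lemma canon_ex (x : M) : exists y, `[< P (x - y) >].
Proof. by exists x; apply/asboolP; rewrite subrr. Qed.

Definition canon (x : M) : M := xchoose (canon_ex x).

Lemma canonP x : P (x - canon x).
Proof. exact/asboolP/(xchooseP (canon_ex x)). Qed.

Lemma PN x : P x -> P (- x).
Proof. by move=> px; rewrite -sub0r; apply: PB. Qed.

Lemma PD x y : P x -> P y -> P (x + y).
Proof. by move=> px py; rewrite -[y]opprK; apply: PB => //; apply: PN. Qed.

Lemma canon_eq x y : P (x - y) -> canon x = canon y.
Proof.
move=> pxy; apply: eq_xchoose => z; apply/asboolP/asboolP => h.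
  have -> : y - z = (x - z) - (x - y) by rewrite opprB [RHS]addrC addrA subrK.
  by apply: PB.
have -> : x - z = (x - y) + (y - z) by rewrite addrA subrK.
by apply: PD.
Qed.

Lemma canon_eqP x y : canon x = canon y -> P (x - y).
Proof.
move=> e; have -> : x - y = (x - canon x) - (y - canon y) by rewrite e opprB addrA subrK.
by apply: PB; apply: canonP.
Qed.

Lemma canon_idem x : canon (canon x) = canon x.
Proof.
apply: canon_eq; rewrite -opprB; apply: PN; exact: canonP.
Qed.

Record quo := Quo { qval : M; qvalP : canon qval == qval }.
HB.instance Definition _ := [isSub for qval].
HB.instance Definition _ := [Choice of quo by <:].

Definition qpi (x : M) : quo := @Quo (canon x) (introT eqP (canon_idem x)).

Lemma qpiK (q : quo) : qpi (qval q) = q.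
Proof. by apply: val_inj => /=; apply/eqP; case: q. Qed.

Lemma qpi_eq x y : qpi x = qpi y <-> P (x - y).
Proof.
split; first by move=> /(congr1 qval) /= /canon_eqP.
by move=> h; apply: val_inj => /=; apply: canon_eq.
Qed.

Definition qadd (a b : quo) := qpi (qval a + qval b).
Definition qopp (a : quo) := qpi (- qval a).
Definition qzero := qpi 0.
Definition qscale (r : R) (a : quo) := qpi (r *: qval a).

Lemma qvalE x : P (qval (qpi x) - x).
Proof. by rewrite /= -opprB; apply: PN; apply: canonP. Qed.

Lemma qaddE x y : qadd (qpi x) (qpi y) = qpi (x + y).
Proof.
apply/qpi_eq.
have -> : qval (qpi x) + qval (qpi y) - (x + y) = (qval (qpi x) - x) + (qval (qpi y) - y).
  by rewrite opprD addrACA.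
by apply: PD; apply: qvalE.
Qed.

Lemma qoppE x : qopp (qpi x) = qpi (- x).
Proof. by apply/qpi_eq; rewrite -opprD; apply: PN; apply: qvalE. Qed.

Lemma qscaleE r x : qscale r (qpi x) = qpi (r *: x).
Proof. by apply/qpi_eq; rewrite -scalerBr; apply: PZ; apply: qvalE. Qed.

Lemma quo_ind (Q : quo -> Prop) : (forall x, Q (qpi x)) -> forall q, Q q.
Proof. by move=> h q; rewrite -(qpiK q). Qed.

Lemma qaddA : associative qadd.
Proof.
by elim/quo_ind => x; elim/quo_ind => y; elim/quo_ind => z; rewrite !qaddE addrA.
Qed.
Lemma qaddC : commutative qadd.
Proof. by elim/quo_ind => x; elim/quo_ind => y; rewrite !qaddE addrC. Qed.
Lemma qadd0 : left_id qzero qadd.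
Proof. by elim/quo_ind => x; rewrite /qzero qaddE add0r. Qed.
Lemma qaddN : left_inverse qzero qopp qadd.
Proof. by elim/quo_ind => x; rewrite qoppE qaddE addNr. Qed.

HB.instance Definition _ := GRing.isZmodule.Build quo qaddA qaddC qadd0 qaddN.

Lemma qpiD x y : qpi x + qpi y = qpi (x + y).
Proof. exact: qaddE. Qed.

Lemma qscaleA a b (v : quo) : qscale a (qscale b v) = qscale (a * b) v.
Proof. by elim/quo_ind: v => x; rewrite !qscaleE scalerA. Qed.
Lemma qscale1 : left_id 1 qscale.
Proof. by elim/quo_ind => x; rewrite qscaleE scale1r. Qed.
Lemma qscaleDr : right_distributive qscale +%R.
Proof.
by move=> r; elim/quo_ind => x; elim/quo_ind => y; rewrite qpiD !qscaleE qpiD scalerDr.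
Qed.
Lemma qscaleDl (v : quo) : {morph qscale^~ v : a b / a + b}.
Proof.
by elim/quo_ind: v => x a b; rewrite !qscaleE qpiD scalerDl.
Qed.

HB.instance Definition _ := GRing.Zmodule_isLmodule.Build R quo qscaleA qscale1 qscaleDr qscaleDl.

Lemma qpiZ r x : r *: qpi x = qpi (r *: x).
Proof. exact: qscaleE. Qed.

Lemma qpi_is_linear : linear qpi.
Proof. by move=> r x y; rewrite qpiZ qpiD. Qed.

HB.instance Definition _ := GRing.isLinear.Build R M quo _ qpi qpi_is_linear.

Lemma qpi0 x : qpi x = 0 <-> P x.
Proof. by rewrite -[0]/(qpi 0) qpi_eq subr0. Qed.
End Quot.


Section Invariant.
Variables (R : comPzRingType) (A N : lmodType R) (a : R) (lam : A -> R) (mu : N -> R).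
Hypothesis lamD : forall x y, lam (x + y) = lam x + lam y.
Hypothesis lamZ : forall r x, lam (r *: x) = r * lam x.
Hypothesis lam0 : lam 0 = 0.
Hypothesis lamA : forall x, exists y, lam x = a * y.
Hypothesis muD : forall n n', exists y, mu (n + n') - mu n - mu n' = a * y.
Hypothesis muZ : forall r n, exists y, mu (r *: n) - r * mu n = a * y.

Definition iota_inv (L : seq (A * N)) := \sum_(p <- L) lam p.1 * mu p.2.

Lemma inv_teq L L' : teq L L' -> exists r, iota_inv L - iota_inv L' = a ^+ 2 * r.
Proof.
elim => {L L'}.
- by move=> t; exists 0; rewrite subrr mulr0.
- move=> t u _ [r e]; exists (- r); by rewrite -opprB e mulrN.
- move=> t u v _ [r1 e1] _ [r2 e2]; exists (r1 + r2).
  by rewrite mulrDr -e1 -e2 addrA subrK.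
- move=> t1 t2 u1 u2 _ [r1 e1] _ [r2 e2]; exists (r1 + r2).
  rewrite /iota_inv !big_cat /= mulrDr -e1 -e2 /iota_inv; ring.
- by move=> t u; exists 0; rewrite /iota_inv !big_cat /= addrC subrr mulr0.
- move=> x x' n; exists 0; rewrite /iota_inv !big_cons !big_nil /= lamD; ring.
- move=> x n n'; have [y hy] := muD n n'; have [z hz] := lamA x.
  exists (z * y); rewrite /iota_inv !big_cons !big_nil /=.
  have -> : lam x * mu (n + n') + 0 - (lam x * mu n + (lam x * mu n' + 0))
          = lam x * (mu (n + n') - mu n - mu n') by ring.
  by rewrite hy hz; ring.
- move=> r x n; have [y hy] := muZ r n; have [z hz] := lamA x.
  exists (- (z * y)); rewrite /iota_inv !big_cons !big_nil /= lamZ.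
  have -> : r * lam x * mu n + 0 - (lam x * mu (r *: n) + 0)
          = - (lam x * (mu (r *: n) - r * mu n)) by ring.
  by rewrite hy hz; ring.
- by move=> n; exists 0; rewrite /iota_inv !big_cons !big_nil /= lam0; ring.
Qed.
End Invariant.

Section Back.
Variable R : comPzRingType.
Local Notation F := (R -> R^o).

Lemma scaleo (r x : R^o) : r *: x = r * x.
Proof. by []. Qed.

Lemma scalefE (r : R) (x : F) b : (r *: x) b = r * x b.
Proof. by []. Qed.
Lemma addfE (x y : F) b : (x + y) b = x b + y b.
Proof. by []. Qed.
Lemma oppfE (x : F) b : (- x) b = - x b.
Proof. by []. Qed.
Lemma zerofE b : (0 : F) b = 0.
Proof. by []. Qed.

Definition Pk : submodP F.
Proof.
refine (@SubmodP R F (fun phi => forall b, b * phi b = 0) _ _ _).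
- by move=> b; rewrite mulr0.
- by move=> x y hx hy b; rewrite addfE oppfE mulrBr hx hy subrr.
- by move=> r x hx b; rewrite scalefE mulrCA hx mulr0.
Defined.

Definition Pi : submodP F.
Proof.
refine (@SubmodP R F (fun phi => forall b, exists y, phi b = b * y) _ _ _).
- by move=> b; exists 0; rewrite mulr0.
- move=> x y hx hy b; have [u hu] := hx b; have [v hv] := hy b.
  by exists (u - v); rewrite addfE oppfE hu hv mulrBr.
- move=> r x hx b; have [u hu] := hx b; exists (r * u); by rewrite scalefE hu mulrCA.
Defined.

Definition mulid (phi : F) : F := fun b => b * phi b.

Definition fE (q : quo Pk) : F := mulid (qval q).

Lemma fE_qpi (z : F) : fE (qpi Pk z) = mulid z.
Proof.
apply/funext => b; rewrite /fE /mulid.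
have := canonP Pk z b; rewrite /= mulrBr => /eqP; rewrite subr_eq0 => /eqP <-.
done.
Qed.

Lemma fE_is_linear : linear fE.
Proof.
move=> r; elim/quo_ind => x; elim/quo_ind => y.
rewrite qpiZ qpiD !fE_qpi; apply/funext => b; rewrite /mulid /=.
by rewrite addfE !scalefE addfE scalefE mulrDr mulrCA.
Qed.

HB.instance Definition _ := GRing.isLinear.Build R (quo Pk) F _ fE fE_is_linear.

End Back.

Lemma backward (R : comPzRingType) (S : {pred R}) : multiplicative_subset S ->
  (forall E : lmodType R, uS_absolutely_pure S E) -> uniformly_S_vNr S.
Proof.
move=> [S1 SM] hE.
pose g : {linear (R -> R^o) -> quo (Pi R)} := qpi (Pi R).
pose f : {linear quo (Pk R) -> (R -> R^o)} := @fE R.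
have ex : uS_exact S f g.
  exists 1 => //; split.
  - elim/quo_ind => x; rewrite /f /= fE_qpi => h; rewrite scale1r; apply/qpi0 => b.
    by have := congr1 (fun phi => phi b) h; rewrite zerofE.
  - move=> b /qpi0 hb; have [y hy] := choice hb.
    exists (qpi (Pk R) y); rewrite /f /= fE_qpi scale1r; apply/funext => c.
    by rewrite /mulid hy.
  - elim/quo_ind => x; rewrite scale1r /f /= fE_qpi; apply/qpi0 => b.
    by exists (x b).
  - by move=> c; exists (qval c); rewrite scale1r /g /= qpiK.
have [s sS [c1 _ _ _]] := hE _ _ _ _ _ ex (quo (Pi R)).
exists s => // a.
pose d : R -> R^o := fun b => if b == a then 1 else 0.
pose ea := qpi (Pk R) d.
pose na := g d.
have h1 : teq (tmap f [:: (ea, na)]) [::].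
  rewrite /tmap /=.
  have -> : f ea = a *: d.
    rewrite /f /ea /= fE_qpi; apply/funext => b; rewrite /mulid scalefE /d.
    by case: eqP => [->|_]; rewrite ?mulr0.
  apply: (teq_trans (teq_scale a d na)).
  have -> : a *: na = 0.
    rewrite /na -(linearZZ g); apply/qpi0 => b; rewrite scalefE /d.
    by case: eqP => [->|_]; [exists 1; rewrite mulr1 | exists 0; rewrite !mulr0].
  exact: teq_r0.
have h2 := c1 _ h1.
pose lam (x : quo (Pk R)) := a * qval x a.
pose mu (n : quo (Pi R)) := qval n a.
have lamE : forall z, lam (qpi (Pk R) z) = a * z a.
  move=> z; have := canonP (Pk R) z a; rewrite /lam /= mulrBr => /eqP; rewrite subr_eq0 => /eqP <-.
  done.
have muE : forall z, exists y, mu (qpi (Pi R) z) = z a + a * y.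
  move=> z; have [y hy] := canonP (Pi R) z a.
  exists (- y); rewrite /mu /= mulrN -hy addfE oppfE opprB addrC subrK //.
have lamD : forall x y, lam (x + y) = lam x + lam y.
  by elim/quo_ind => x; elim/quo_ind => y; rewrite qpiD !lamE addfE mulrDr.
have lamZ : forall r x, lam (r *: x) = r * lam x.
  by move=> r; elim/quo_ind => x; rewrite qpiZ !lamE scalefE mulrCA.
have lam0 : lam 0 = 0.
  by have := lamE 0; rewrite zerofE mulr0.
have lamA : forall x, exists y, lam x = a * y by move=> x; exists (qval x a).
have muD : forall n n', exists y, mu (n + n') - mu n - mu n' = a * y.
  elim/quo_ind => x; elim/quo_ind => x'.
  have [y1 k1] := muE (x + x'); have [y2 k2] := muE x; have [y3 k3] := muE x'.
  exists (y1 - y2 - y3); rewrite qpiD k1 k2 k3 addfE; ring.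
have muZ : forall r n, exists y, mu (r *: n) - r * mu n = a * y.
  move=> r; elim/quo_ind => x.
  have [y1 k1] := muE (r *: x); have [y2 k2] := muE x.
  exists (y1 - r * y2); rewrite qpiZ k1 k2 scalefE; ring.
have [r hr] := inv_teq lamD lamZ lam0 lamA muD muZ h2.
move: hr; rewrite /iota_inv /tscale /= big_cons !big_nil /= lamZ lamE.
have [y hy] := muE d.
have hy2 : canon (Pi R) d a = d a + a * y := hy.
rewrite hy2 /d eqxx => hr.
exists (r - s * y).
have -> : (r - s * y) * a ^+ 2 = a ^+ 2 * r - s * y * a ^+ 2 by ring.
rewrite -(subr0 (a ^+ 2 * r)) -hr; ring.
Qed.


Theorem theorem3p5 (R : comPzRingType) (S : {pred R}) :
  multiplicative_subset S ->
  (uniformly_S_vNr S <-> forall E : lmodType R, uS_absolutely_pure S E).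
Proof.
move=> hS; split; [exact: forward hS | exact: backward hS].
Qed.
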